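(* Let $f:\mathbb{R}^N\to\mathbb{R}$ be continuous with $\operatorname{argmin} f\neq\emptyset$. Let $p>1$, $\mu>0$, and suppose $f$ is globally $p$-Łojasiewicz with constant $\mu$, i.e., with $\frac1p+\frac1q=1$, $$(\forall x\in\mathbb{R}^N)(\forall x^*\in\partial_L f(x))\quad f(x)-\inf f \le \frac{1}{q\,\mu^{q/p}}\|x^*\|^q.$$ Then for all $x\in\mathbb{R}^N$, $$\frac{1}{(p-1)^{p-1}}\frac{\mu}{p}\, d_{\operatorname{argmin} f}(x)^p \le f(x)-\inf f.$$
   Context: For a closed set $S\subset\mathbb{R}^N$, $d_S(x) := \inf_{y\in S}\|y-x\|$ (Euclidean norm). For $g:\mathbb{R}^N\to\mathbb{R}$, the Fréchet subdifferential $\partial_F g(x)$ is the set of $x^*$ with $\liminf_{y\to x} \frac{g(y)-g(x)-\langle x^*,y-x\rangle}{\|y-x\|}\ge 0$; the limiting subdifferential $\partial_L g(x)$ is the set of $x^*$ for which there exist $x_n\to x$ and $x_n^*\to x^*$ with $g(x_n)\to g(x)$ and $x_n^*\in\partial_F g(x_n)$. *)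

(* Defs.v *)
From HB Require Import structures.
From mathcomp Require Import all_boot all_order all_algebra.
From mathcomp Require Import all_classical all_reals all_analysis.
Set Implicit Arguments. Unset Strict Implicit. Unset Printing Implicit Defensive.
Import Order.TTheory GRing.Theory Num.Theory.
Local Open Scope classical_set_scope.
Local Open Scope ring_scope.

Section Defs.
Variables (R : realType) (N : nat).
Notation vec := 'rV[R]_N.

Definition dotv (x y : vec) : R := \sum_(i < N) x ord0 i * y ord0 i.
Definition enorm (x : vec) : R := Num.sqrt (dotv x x).

Definition dist_set (S : set vec) (x : vec) : R :=
  inf [set enorm (y - x) | y in S].

Definition argmin (f : vec -> R) : set vec := [set x | forall y, f x <= f y].
Definition inff (f : vec -> R) : R := inf [set f x | x in setT].

Definition econtinuous (f : vec -> R) : Prop :=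
  forall x (e : R), 0 < e -> exists2 d : R, 0 < d &
    forall y, enorm (y - x) < d -> `|f y - f x| < e.

(* Frechet subdifferential: liminf_{y->x} (g y - g x - <x*,y-x>)/||y-x|| >= 0,
   unfolded with epsilon-delta *)
Definition frechet_subdiff (g : vec -> R) (x : vec) : set vec :=
  [set xs | forall (e : R), 0 < e -> exists2 d : R, 0 < d &
     forall y, 0 < enorm (y - x) < d ->
       - e <= (g y - g x - dotv xs (y - x)) / enorm (y - x)].

Definition vcvg (u : nat -> vec) (l : vec) : Prop :=
  forall (e : R), 0 < e -> exists n0 : nat, forall n, (n0 <= n)%N -> enorm (u n - l) < e.
Definition rcvg (u : nat -> R) (l : R) : Prop :=
  forall (e : R), 0 < e -> exists n0 : nat, forall n, (n0 <= n)%N -> `|u n - l| < e.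

Definition limiting_subdiff (g : vec -> R) (x : vec) : set vec :=
  [set xs | exists (xn xsn : nat -> vec),
     [/\ vcvg xn x, vcvg xsn xs, rcvg (fun n => g (xn n)) (g x) &
         forall n, frechet_subdiff g (xn n) (xsn n)]].
End Defs.

(* Main.v *)
Require Import Defs.
From HB Require Import structures.
From mathcomp Require Import all_boot all_order all_algebra.
From mathcomp Require Import all_classical all_reals all_analysis.
From mathcomp Require Import ring lra.
Import Order.TTheory GRing.Theory Num.Theory numFieldNormedType.Exports.
Local Open Scope classical_set_scope.
Local Open Scope ring_scope.
Set Implicit Arguments. Unset Strict Implicit.


Section Vec.
Variables (R : realType) (N : nat).
Notation vec := 'rV[R]_N.
Implicit Types x y z : vec.

Lemma dotvC x y : dotv x y = dotv y x.
Proof. by apply: eq_bigr => i _; rewrite mulrC. Qed.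

Lemma dotvDl x y z : dotv (x + y) z = dotv x z + dotv y z.
Proof. by rewrite /dotv -big_split; apply: eq_bigr => i _; rewrite mxE mulrDl. Qed.

Lemma dotvZl a x y : dotv (a *: x) y = a * dotv x y.
Proof. by rewrite /dotv mulr_sumr; apply: eq_bigr => i _; rewrite mxE mulrA. Qed.

Lemma dotvNl x y : dotv (- x) y = - dotv x y.
Proof. by rewrite -scaleN1r dotvZl mulN1r. Qed.

Lemma dotvBl x y z : dotv (x - y) z = dotv x z - dotv y z.
Proof. by rewrite dotvDl dotvNl. Qed.

Lemma dotvDr x y z : dotv x (y + z) = dotv x y + dotv x z.
Proof. by rewrite dotvC dotvDl !(dotvC x). Qed.

Lemma dotvZr a x y : dotv x (a *: y) = a * dotv x y.
Proof. by rewrite dotvC dotvZl dotvC. Qed.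

Lemma dotvBr x y z : dotv x (y - z) = dotv x y - dotv x z.
Proof. by rewrite dotvC dotvBl !(dotvC x). Qed.

Lemma dotv0l y : dotv 0 y = 0.
Proof. by rewrite -(scale0r (0 : vec)) dotvZl mul0r. Qed.

Lemma dotv_ge0 x : 0 <= dotv x x.
Proof. by apply: sumr_ge0 => i _; rewrite -expr2 sqr_ge0. Qed.

Lemma enorm_ge0 x : 0 <= enorm x.
Proof. exact: sqrtr_ge0. Qed.

Lemma enorm_sq x : enorm x ^+ 2 = dotv x x.
Proof. by rewrite sqr_sqrtr // dotv_ge0. Qed.

Lemma enorm0 : enorm (0 : vec) = 0.
Proof. by rewrite /enorm dotv0l sqrtr0. Qed.

Lemma dotv_eq0 x : dotv x x = 0 -> x = 0.
Proof.
move=> /eqP; rewrite psumr_eq0; last by move=> i _; rewrite -expr2 sqr_ge0.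
move=> /allP H; apply/rowP => i; rewrite mxE.
have := H i (mem_index_enum i); rewrite /= mulf_eq0 orbb => /eqP //.
Qed.

Lemma CS x y : dotv x y ^+ 2 <= dotv x x * dotv y y.
Proof.
have [a0|] := eqVneq (dotv x x) 0.
  by rewrite a0 (dotv_eq0 a0) dotv0l expr0n /= mul0r.
move=> an0; have apos : 0 < dotv x x by rewrite lt_neqAle eq_sym an0 dotv_ge0.
set a := dotv x x; set b := dotv x y; set c := dotv y y.
have := dotv_ge0 (a *: y - b *: x).
rewrite !(dotvBl, dotvBr, dotvZl, dotvZr) -/a -/c (dotvC y x) -/b.
move=> H.
have : 0 <= a * (a * c - b ^+ 2) by rewrite expr2; lra.
by rewrite pmulr_rge0 // subr_ge0.
Qed.

Lemma CSn x y : `|dotv x y| <= enorm x * enorm y.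
Proof.
rewrite -(ler_pXn2r (_ : (0 < 2)%N)) ?nnegrE ?mulr_ge0 ?enorm_ge0 //.
by rewrite real_normK ?num_real // exprMn !enorm_sq CS.
Qed.

Lemma enorm_sqD x y : enorm (x + y) ^+ 2 = enorm x ^+ 2 + 2 * dotv x y + enorm y ^+ 2.
Proof.
rewrite !enorm_sq dotvDl !dotvDr (dotvC y x); ring.
Qed.

Lemma enormD x y : enorm (x + y) <= enorm x + enorm y.
Proof.
rewrite -(ler_pXn2r (_ : (0 < 2)%N)) ?nnegrE ?addr_ge0 ?enorm_ge0 //.
have := le_trans (ler_norm _) (CSn x y).
rewrite enorm_sqD sqrrD mulr2n; lra.
Qed.

Lemma enormZ a x : enorm (a *: x) = `|a| * enorm x.
Proof.
by rewrite /enorm dotvZl dotvZr mulrA -expr2 sqrtrM ?sqr_ge0 // sqrtr_sqr.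
Qed.

Lemma enormN x : enorm (- x) = enorm x.
Proof. by rewrite -scaleN1r enormZ normrN normr1 mul1r. Qed.

Lemma enormB x y : enorm (x - y) = enorm (y - x).
Proof. by rewrite -enormN opprB. Qed.

Lemma coord_le x i : `|x ord0 i| <= enorm x.
Proof.
rewrite -sqrtr_sqr ler_sqrt ?dotv_ge0 //.
rewrite /dotv (bigD1 i) //= -expr2 lerDl.
by apply: sumr_ge0 => j _; rewrite -expr2 sqr_ge0.
Qed.

End Vec.


Section Ex.
Variables (R : realType) (N : nat).
Notation vec := 'rV[R]_N.

Lemma mx_coord_le (v : vec) i : `|v ord0 i| <= `|v|.
Proof.
have /mapP[j Hj ->] : `|v ord0 i| \in [seq `|v x.1 x.2| | x : 'I_1 * 'I_N].
  by apply/mapP; exists (ord0, i) => //=; rewrite mem_enum.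
by rewrite [leRHS]/Num.norm /= mx_normrE; apply/bigmax_geP; right => /=; exists j.
Qed.

Lemma enorm_le_mx (v : vec) : enorm v ^+ 2 <= N%:R * `|v| ^+ 2.
Proof.
rewrite enorm_sq /dotv.
have -> : N%:R * `|v| ^+ 2 = \sum_(i < N) `|v| ^+ 2.
  by rewrite sumr_const card_ord mulr_natl.
apply: ler_sum => i _.
rewrite -expr2 -real_normK ?num_real //.
by rewrite ler_pXn2r ?nnegrE ?normr_ge0 // mx_coord_le.
Qed.

Lemma enorm_le_coord (v : vec) M : (forall i, `|v ord0 i| <= M) ->
  enorm v ^+ 2 <= N%:R * M ^+ 2.
Proof.
move=> HM; rewrite enorm_sq /dotv.
have -> : N%:R * M ^+ 2 = \sum_(i < N) M ^+ 2.
  by rewrite sumr_const card_ord mulr_natl.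
apply: ler_sum => i _.
rewrite -expr2 -real_normK ?num_real //.
by rewrite ler_pXn2r ?nnegrE ?normr_ge0 // (le_trans _ (HM i)).
Qed.

Lemma econt_cont (F : vec -> R) : econtinuous F -> continuous F.
Proof.
move=> H x; apply/(@cvgrPdist_lt _ _ _ (nbhs x) (nbhs_filter x)) => e e0.
have [d d0 Hd] := H x e e0.
apply/nbhs_ballP.
have N1 : 0 < N%:R + 1 :> R by rewrite ltr_wpDl.
have dN : 0 < d / (N%:R + 1) by rewrite divr_gt0.
exists (d / (N%:R + 1)) => // y [_ /= Hy].
rewrite distrC; apply: Hd.
have Hc : forall i, `|(y - x) ord0 i| <= d / (N%:R + 1).
  move=> i; have := Hy ord0 i; rewrite /ball /= => h.
  by rewrite !mxE distrC ltW.
have := enorm_le_coord Hc => Hle.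
have N0 : 0 <= N%:R :> R by [].
have HM : d / (N%:R + 1) * (N%:R + 1) = d by rewrite divfK // gt_eqF.
move: (d / (N%:R + 1)) Hle dN HM => M Hle dN HM.
have : enorm (y - x) ^+ 2 < d ^+ 2.
  apply: (le_lt_trans Hle); rewrite -HM exprMn.
  have M2 : 0 < M ^+ 2 by rewrite exprn_gt0.
  have HN : N%:R < (N%:R + 1) ^+ 2 :> R by rewrite expr2; nra.
  nra.
by rewrite ltr_pXn2r ?nnegrE ?enorm_ge0 ?ltW.
Qed.

Lemma exists_min (F : vec -> R) (x0 : vec) (r : R) : econtinuous F ->
  (forall y, r <= enorm (y - x0) -> F x0 <= F y) -> exists z, forall y, F z <= F y.
Proof.
move=> Fc HF.
pose A := [set v : vec | forall i, `[x0 ord0 i - `|r|, x0 ord0 i + `|r|]%classic (v ord0 i)].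
have cA : compact A.
  by apply: (@rV_compact _ _ (fun i => `[x0 ord0 i - `|r|, x0 ord0 i + `|r|]%classic)) => i;
    exact: segment_compact.
have A0 : A !=set0.
  by exists x0 => i /=; rewrite in_itv /= -ler_distl subrr normr0.
have cF : {within A, continuous F} by apply: continuous_subspaceT; exact: econt_cont.
have [c /set_mem Ac Hc] := compact_EVT_min A0 cA cF.
exists c => y.
have [Ay|nAy] := pselect (A y); first by apply: Hc; exact: mem_set.
have /existsNP [i Hi] := nAy.
have Fx0 : F c <= F x0 by apply: Hc; apply: mem_set; case: A0 => // z _;
  move=> i0 /=; rewrite in_itv /= -ler_distl subrr normr0.
apply: (le_trans Fx0); apply: HF.
have : `|r| < `|(y - x0) ord0 i|.
  rewrite !mxE ltNge; apply/negP => h; apply: Hi => /=.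
  by rewrite in_itv /= -ler_distl.
move=> h; apply: le_trans (ler_norm _) _; apply: ltW; apply: lt_le_trans h _.
exact: coord_le.
Qed.

End Ex.


Section C.
Variables (R : realType) (N : nat).
Notation vec := 'rV[R]_N.

Lemma econt_add (F G : vec -> R) : econtinuous F -> econtinuous G ->
  econtinuous (fun y => F y + G y).
Proof.
move=> HF HG x e e0.
have e2 : 0 < e / 2 by rewrite divr_gt0.
have [d1 d10 H1] := HF x _ e2; have [d2 d20 H2] := HG x _ e2.
exists (Num.min d1 d2); first by rewrite lt_min d10 d20.
move=> y; rewrite lt_min => /andP[y1 y2].
have := H1 _ y1; have := H2 _ y2.
rewrite opprD addrACA => h2 h1.
apply: le_lt_trans (ler_normD _ _) _.
by rewrite (splitr e) ltrD.
Qed.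

Lemma econt_lip (F : vec -> R) M : 0 <= M ->
  (forall x y, `|F y - F x| <= M * enorm (y - x)) -> econtinuous F.
Proof.
move=> M0 HF x e e0.
have M1 : 0 < M + 1 by rewrite ltr_wpDl.
exists (e / (M + 1)); first by rewrite divr_gt0.
move=> y hy; apply: le_lt_trans (HF x y) _.
rewrite ltr_pdivlMr // in hy.
have := enorm_ge0 (y - x); nra.
Qed.

Lemma enorm_rev (x y : vec) : `|enorm x - enorm y| <= enorm (x - y).
Proof.
rewrite ler_norml; apply/andP; split.
- have := enormD (y - x) x; rewrite subrK enormB; lra.
- have := enormD (x - y) y; rewrite subrK; lra.
Qed.

Lemma econt_dist (a : vec) c : 0 <= c -> econtinuous (fun y => c * enorm (y - a)).
Proof.
move=> c0; apply: (econt_lip c0) => x y.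
rewrite -mulrBr normrM ger0_norm //; apply: ler_wpM2l => //.
apply: le_trans (enorm_rev _ _) _.
by rewrite opprB addrA subrK.
Qed.

Lemma hypot_lip (S1 S2 r1 r2 k : R) : 0 <= S1 -> 0 <= S2 -> 0 <= r1 -> 0 <= r2 -> 0 <= k ->
  S1 ^+ 2 = r1 ^+ 2 + k -> S2 ^+ 2 = r2 ^+ 2 + k -> `|S1 - S2| <= `|r1 - r2|.
Proof.
move=> s1 s2 h1 h2 k0 e1 e2.
have P : (r1 * r2 + k) ^+ 2 <= (S1 * S2) ^+ 2.
  rewrite exprMn e1 e2; have := sqr_ge0 (r1 - r2); rewrite !expr2; nra.
have Q : r1 * r2 + k <= S1 * S2.
  have a0 : 0 <= r1 * r2 + k by rewrite addr_ge0 ?mulr_ge0.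
  have b0 : 0 <= S1 * S2 by rewrite mulr_ge0.
  by rewrite -(ler_pXn2r (_ : (0 < 2)%N)) ?nnegrE.
rewrite -(ler_pXn2r (_ : (0 < 2)%N)) ?nnegrE ?normr_ge0 //.
rewrite !real_normK ?num_real // !sqrrB e1 e2; lra.
Qed.

Lemma econt_pen (a : vec) c eta : 0 <= c ->
  econtinuous (fun y => c * Num.sqrt (enorm (y - a) ^+ 2 + eta ^+ 2)).
Proof.
move=> c0; apply: (econt_lip c0) => x y.
rewrite -mulrBr normrM ger0_norm //; apply: ler_wpM2l => //.
have E : (y - a) - (x - a) = y - x by rewrite opprB addrA subrK.
rewrite -E; apply: le_trans (enorm_rev (y - a) (x - a)).
apply: (@hypot_lip _ _ _ _ (eta ^+ 2)); rewrite ?sqrtr_ge0 ?enorm_ge0 ?sqr_ge0 //.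
  by rewrite sqr_sqrtr // addr_ge0 ?sqr_ge0.
by rewrite sqr_sqrtr // addr_ge0 ?sqr_ge0.
Qed.

Lemma powR_small (t al : R) : 0 < al <= 1 -> 0 <= t <= 1 -> t <= powR t al.
Proof.
move=> /andP[a0 a1] /andP[t0 t1].
have [->|tn0] := eqVneq t 0; first by rewrite powR_ge0.
apply: ger1_powR => //; rewrite t1 andbT lt_neqAle eq_sym tn0 //.
Qed.

Lemma powR_subadd (a b al : R) : 0 < al <= 1 -> 0 <= a -> 0 <= b ->
  powR (a + b) al <= powR a al + powR b al.
Proof.
move=> hal a0 b0.
have [s0|] := eqVneq (a + b) 0.
  by rewrite s0 powR0 ?addr_ge0 ?powR_ge0 //; case/andP: hal => h _; rewrite gt_eqF.
move=> sn0; have sp : 0 < a + b by rewrite lt_neqAle eq_sym sn0 addr_ge0.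
have Ea : powR a al = powR (a / (a + b)) al * powR (a + b) al.
  by rewrite -powRM ?divr_ge0 ?addr_ge0 // divfK.
have Eb : powR b al = powR (b / (a + b)) al * powR (a + b) al.
  by rewrite -powRM ?divr_ge0 ?addr_ge0 // divfK.
have la : a / (a + b) <= powR (a / (a + b)) al.
  apply: powR_small => //; rewrite divr_ge0 ?ler_pdivrMr ?mul1r //= ?lerDl //.
  by rewrite ltW.
have lb : b / (a + b) <= powR (b / (a + b)) al.
  apply: powR_small => //; rewrite divr_ge0 ?ler_pdivrMr ?mul1r //= ?lerDr //.
  by rewrite ltW.
have P := powR_ge0 (a + b) al.
rewrite Ea Eb.
apply: le_trans (lerD (ler_wpM2r P la) (ler_wpM2r P lb)).
by rewrite -mulrDl -mulrDl divff ?mul1r.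
Qed.

Lemma powR_holder (a b al : R) : 0 < al <= 1 -> 0 <= a -> 0 <= b ->
  `|powR a al - powR b al| <= powR `|a - b| al.
Proof.
move=> hal.
wlog ab : a b / b <= a.
  move=> W a0 b0; have [ba|ab] := leP b a; first exact: W.
  by rewrite distrC (distrC a) W // ltW.
move=> a0 b0.
have hal0 : 0 <= al by case/andP: hal => h _; exact: ltW.
have mono : powR b al <= powR a al by apply: ge0_ler_powR.
rewrite ger0_norm ?subr_ge0 // ger0_norm ?subr_ge0 //.
rewrite lerBlDl; have {1}-> : a = b + (a - b) by rewrite addrC subrK.
by apply: powR_subadd => //; rewrite subr_ge0.
Qed.

Lemma econt_powR (g : vec -> R) al : 0 < al <= 1 -> econtinuous g ->
  (forall y, 0 <= g y) -> econtinuous (fun y => powR (g y) al).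
Proof.
move=> hal gc g0 x e e0.
have al0 : 0 < al by case/andP: hal.
have e'0 : 0 < powR e al^-1 by rewrite powR_gt0.
have [d d0 Hd] := gc x _ e'0.
exists d => // y hy.
apply: le_lt_trans (powR_holder hal (g0 y) (g0 x)) _.
have -> : e = powR (powR e al^-1) al.
  by rewrite -powRrM mulVf ?gt_eqF // powRr1 // ltW.
apply: gt0_ltr_powR => //; rewrite ?nnegrE ?normr_ge0 ?ltW //; exact: Hd.
Qed.

Lemma young_tangent (p t s : R) : 1 < p -> 0 <= t -> 0 <= s ->
  p * t * powR s (p - 1) <= powR t p + (p - 1) * powR s p.
Proof.
move=> p1 t0 s0.
have p0 : 0 < p by apply: lt_trans p1.
have pm0 : 0 < p - 1 by rewrite subr_gt0.
have q0 : 0 < p / (p - 1) by rewrite divr_gt0.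
have := @conjugate_powR _ t (powR s (p - 1)) p (p / (p - 1)) t0 (powR_ge0 _ _) p0 q0.
rewrite -powRrM mulrCA divff ?gt_eqF // mulr1 invf_div.
have -> : p^-1 + (p - 1) / p = 1 by field; rewrite gt_eqF.
move=> /(_ erefl) h.
have E : powR t p / p + powR s p * ((p - 1) / p) = (powR t p + (p - 1) * powR s p) / p.
  by field; rewrite gt_eqF.
rewrite E in h.
by rewrite -mulrA -ler_pdivlMl // [p^-1 * _]mulrC.
Qed.

Lemma pen_scalar (A B eta t X : R) : 0 < eta -> eta <= A -> 0 <= t -> 0 <= B ->
  - (A * t) <= X -> B ^+ 2 = A ^+ 2 + 2 * X + t ^+ 2 ->
  A * B <= A ^+ 2 + X + A * (t ^+ 2 / eta).
Proof.
move=> e0 eA t0 B0 hX hB.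
have A0 : 0 < A by apply: lt_le_trans eA.
set c := t ^+ 2 / eta.
have c0 : 0 <= c by rewrite divr_ge0 ?sqr_ge0 ?ltW.
have ec : eta * c = t ^+ 2 by rewrite /c mulrC divfK ?gt_eqF.
have Ac : t ^+ 2 <= A * c by rewrite -ec ler_wpM2r.
have Y0 : 0 <= A ^+ 2 + X + A * c.
  have : 0 <= (A - t) ^+ 2 by rewrite sqr_ge0.
  rewrite !expr2 in Ac *; nra.
have P1 : 0 <= A * B by rewrite mulr_ge0 // ltW.
rewrite -(ler_pXn2r (_ : (0 < 2)%N)) ?nnegrE //.
rewrite exprMn hB.
have : 0 <= (X + A * c) ^+ 2 by rewrite sqr_ge0.
have A2 : 0 < A ^+ 2 by rewrite exprn_gt0.
have H1 : 0 <= A ^+ 2 * (A * c - t ^+ 2).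
  by apply: mulr_ge0 (ltW A2) _; rewrite subr_ge0.
have H2 : 0 <= A ^+ 2 * (A * c) := mulr_ge0 (ltW A2) (mulr_ge0 (ltW A0) c0).
rewrite !expr2 in H1 H2 *; nra.
Qed.

Lemma pen_vec (z w y : vec) eta : 0 < eta ->
  Num.sqrt (enorm (y - z) ^+ 2 + eta ^+ 2) <=
  Num.sqrt (enorm (w - z) ^+ 2 + eta ^+ 2)
  + dotv (w - z) (y - w) / Num.sqrt (enorm (w - z) ^+ 2 + eta ^+ 2)
  + enorm (y - w) ^+ 2 / eta.
Proof.
move=> e0.
set A := Num.sqrt (enorm (w - z) ^+ 2 + eta ^+ 2).
set B := Num.sqrt (enorm (y - z) ^+ 2 + eta ^+ 2).
have A2 : A ^+ 2 = enorm (w - z) ^+ 2 + eta ^+ 2 by rewrite /A sqr_sqrtr // addr_ge0 ?sqr_ge0.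
have Ap : 0 <= A := sqrtr_ge0 _.
have e0' : 0 <= eta := ltW e0.
have rA : enorm (w - z) <= A.
  by rewrite -(ler_pXn2r (_ : (0<2)%N)) ?nnegrE ?enorm_ge0 // A2 lerDl sqr_ge0.
have eA : eta <= A.
  by rewrite -(ler_pXn2r (_ : (0<2)%N)) ?nnegrE // A2 lerDr sqr_ge0.
have A0 : 0 < A by apply: lt_le_trans eA.
have hX : - (A * enorm (y - w)) <= dotv (w - z) (y - w).
  rewrite lerNl; apply: le_trans (_ : _ <= `|dotv (w - z) (y - w)|) _.
    by rewrite -normrN ler_norm.
  apply: le_trans (CSn _ _) _; apply: ler_wpM2r => //; exact: enorm_ge0.
have B2 : B ^+ 2 = enorm (y - z) ^+ 2 + eta ^+ 2 by rewrite /B sqr_sqrtr // addr_ge0 ?sqr_ge0.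
have E1 : enorm (y - z) ^+ 2 = enorm (w - z) ^+ 2 + 2 * dotv (w - z) (y - w) + enorm (y - w) ^+ 2.
  rewrite -enorm_sqD; congr (enorm _ ^+ 2).
  by rewrite [RHS]addrC addrA subrK.
have hB : B ^+ 2 = A ^+ 2 + 2 * dotv (w - z) (y - w) + enorm (y - w) ^+ 2.
  rewrite B2 A2 E1; lra.
have := pen_scalar e0 eA (enorm_ge0 _) (sqrtr_ge0 _) hX hB.
rewrite -/B => h.
rewrite -(ler_pM2l A0) !mulrDr mulrCA divff ?gt_eqF // mulr1 -expr2.
exact: h.
Qed.

Lemma enorm_le_pen (v : vec) eta : enorm v <= Num.sqrt (enorm v ^+ 2 + eta ^+ 2).
Proof.
rewrite -(ler_pXn2r (_ : (0<2)%N)) ?nnegrE ?enorm_ge0 ?sqrtr_ge0 //.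
by rewrite [X in _ <= X]sqr_sqrtr ?addr_ge0 ?sqr_ge0 // lerDl sqr_ge0.
Qed.

Lemma powRE (a x : R) : 0 < a -> powR a x = expR (x * ln a).
Proof. by move=> a0; rewrite /powR gt_eqF. Qed.

Lemma powR_expR (a x : R) : powR (expR a) x = expR (x * a).
Proof. by rewrite powRE ?expR_gt0 // expRK. Qed.

Lemma key_identity (p mu : R) : 1 < p -> 0 < mu ->
  (p / (p - 1) * powR mu (p / (p - 1) / p))^-1 *
  powR (p * powR ((powR (p - 1) (p - 1))^-1 * (mu / p)) p^-1) (p / (p - 1)) = 1.
Proof.
move=> p1 mu0.
have p0 : 0 < p by apply: lt_trans p1.
have pm0 : 0 < p - 1 by rewrite subr_gt0.
set a := ln p; set b := ln (p - 1); set c := ln mu.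
have Ea : expR a = p by rewrite lnK // posrE.
have Eb : expR b = p - 1 by rewrite lnK // posrE.
have Ec : expR c = mu by rewrite lnK // posrE.
have hK : (powR (p - 1) (p - 1))^-1 * (mu / p) = expR (- ((p - 1) * b) + (c - a)).
  by rewrite powRE // -/b -expRN !expRD !expRN Ea Ec.
rewrite hK powR_expR.
set E := p^-1 * _.
have -> : p * expR E = expR (a + E) by rewrite expRD Ea.
rewrite powR_expR powRE // -/c.
have -> : p / (p - 1) = expR (a - b) by rewrite expRD expRN Ea Eb.
rewrite -expRD -expRN -expRD -expR0; congr expR.
rewrite expRD expRN Ea Eb.
rewrite /E; field; rewrite ?gt_eqF // ?subr_eq0 ?gt_eqF //.
Qed.

End C.


Lemma aux_r2 (R : realType) (r : R) : r < 1 -> 2 * r < 1 + r.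
Proof. move=> h; lra. Qed.

Lemma aux_r3 (R : realType) (r : R) : r < 1 -> 1 + r < 1 * 2.
Proof. move=> h; lra. Qed.

Unset Implicit Arguments.

Theorem theorem3 (R : realType) (N : nat) (f : 'rV[R]_N -> R) (p mu : R) :
  econtinuous f -> argmin f !=set0 -> 1 < p -> 0 < mu ->
  (let q := p / (p - 1) in
   forall x xs, limiting_subdiff f x xs ->
     f x - inff f <= (q * powR mu (q / p))^-1 * powR (enorm xs) q) ->
  forall x, (powR (p - 1) (p - 1))^-1 * (mu / p) * powR (dist_set (argmin f) x) p
              <= f x - inff f.
Proof.
move=> fc [x0 Hx0] p1 mu0 HL x.
have p0 : 0 < p by apply: lt_trans p1.
have pm0 : 0 < p - 1 by rewrite subr_gt0.
set q := p / (p - 1).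
have q0 : 0 < q by rewrite divr_gt0.
set C := (q * powR mu (q / p))^-1.
have C0 : 0 < C by rewrite invr_gt0 mulr_gt0 ?powR_gt0.
set K := (powR (p - 1) (p - 1))^-1 * (mu / p).
have K0 : 0 < K by rewrite mulr_gt0 ?invr_gt0 ?powR_gt0 ?divr_gt0.
have Einf : inff f = f x0.
  apply/eqP; rewrite eq_le; apply/andP; split.
    apply: ge_inf; last by exists x0.
    by exists (f x0) => _ [y _ <-]; apply: Hx0.
  apply: lb_le_inf; first by exists (f x0), x0.
  by move=> _ [y _ <-]; apply: Hx0.
rewrite Einf.
pose g y := f y - f x0.
have g0 y : 0 <= g y by rewrite /g subr_ge0; apply: Hx0.
have gc : econtinuous g.
  move=> y e e0; have [d d0 Hd] := fc y e e0; exists d => // z hz.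
  by rewrite /g opprB addrA subrK; apply: Hd.
have HF : forall w v, frechet_subdiff f w v -> g w <= C * powR (enorm v) q.
  move=> w v Hv; have := HL w v; rewrite Einf; apply.
  exists (fun=> w), (fun=> v); split => //.
  - by move=> e e0; exists 0%N => n _; rewrite subrr enorm0.
  - by move=> e e0; exists 0%N => n _; rewrite subrr enorm0.
  - by move=> e e0; exists 0%N => n _; rewrite subrr normr0.
have inS z : g z <= 0 -> argmin f z.
  move=> hz y; apply: le_trans (Hx0 y); rewrite /g subr_le0 in hz; exact: hz.
set d := dist_set (argmin f) x.
have hasl : has_lbound [set enorm (y - x) | y in argmin f].
  by exists 0 => _ [y _ <-]; exact: enorm_ge0.
have d0 : 0 <= d.
  apply: lb_le_inf; first by exists (enorm (x0 - x)), x0.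
  by move=> _ [y _ <-]; exact: enorm_ge0.
have dle z : argmin f z -> d <= enorm (z - x).
  by move=> Sz; apply: ge_inf => //; exists z.
have [->|dn0] := eqVneq d 0.
  by rewrite powR0 ?gt_eqF // mulr0; apply: g0.
have dp : 0 < d by rewrite lt_neqAle eq_sym dn0.
rewrite leNgt; apply/negP => Hlt.
have {}Hlt : g x < K * powR d p by [].
set al := p^-1.
have al0 : 0 < al <= 1.
  by rewrite invr_gt0 p0 /= invf_le1 // ltW.
pose h y := powR (g y) al.
have h0 y : 0 <= h y := powR_ge0 _ _.
have hp y : powR (h y) p = g y.
  by rewrite /h -powRrM mulVf ?gt_eqF // powRr1.
have hc : econtinuous h := econt_powR al0 gc g0.
set m := powR K al.
have m0 : 0 < m by rewrite powR_gt0.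
have KEY : C * powR (p * m) q = 1 by exact: key_identity.
have hx : h x < m * d.
  have : powR (g x) al < powR (K * powR d p) al.
    have al0' : 0 < al by case/andP: al0.
    apply: gt0_ltr_powR => //; rewrite ?nnegrE ?g0 //.
    exact: mulr_ge0 (ltW K0) (powR_ge0 _ _).
  rewrite powRM ?powR_ge0 ?ltW // -powRrM mulfV ?gt_eqF // powRr1 ?ltW //.
have hxd : h x / d < m by rewrite ltr_pdivrMr.
set lam := (h x / d + m) / 2.
have lam1 : h x < lam * d.
  by rewrite -ltr_pdivrMr // /lam ltr_pdivlMr //; lra.
have lam2 : lam < m by rewrite /lam ltr_pdivrMr //; lra.
have lam0 : 0 < lam.
  by rewrite /lam divr_gt0 // ltr_wpDl // divr_ge0 ?h0 ?ltW.
set rho := C * powR (p * lam) q.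
have rho1 : rho < 1.
  rewrite -KEY /rho (ltr_pM2l C0); apply: gt0_ltr_powR => //.
  - by rewrite nnegrE mulr_ge0 // ltW.
  - by rewrite nnegrE mulr_ge0 // ltW.
  - by rewrite (ltr_pM2l p0).
have rho0 : 0 < rho by rewrite mulr_gt0 // powR_gt0 // mulr_gt0.
pose Phi y := h y + lam * enorm (y - x).
have Phic : econtinuous Phi := econt_add hc (econt_dist x (ltW lam0)).
have Phix : Phi x = h x by rewrite /Phi subrr enorm0 mulr0 addr0.
have [z Hz] : exists z, forall y, Phi z <= Phi y.
  apply: (@exists_min _ _ Phi x (h x / lam) Phic) => y hy.
  rewrite Phix /Phi.
  have : lam * (h x / lam) <= lam * enorm (y - x) by rewrite ler_pM2l.
  rewrite mulrCA divff ?gt_eqF // mulr1 => hh.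
  have := h0 y; lra.
have gz : 0 < g z.
  rewrite ltNge; apply/negP => hz.
  have dz := dle z (inS z hz).
  have := Hz x; rewrite Phix /Phi => hh.
  have : lam * d <= lam * enorm (z - x) by rewrite ler_pM2l.
  have := h0 z; lra.
set s := h z.
have s0 : 0 < s by rewrite powR_gt0.
have Hlow y : s - lam * enorm (y - z) <= h y.
  have := Hz y; rewrite /Phi -/s => hh.
  have := enormD (y - z) (z - x).
  rewrite (_ : y - z + (z - x) = y - x); last by rewrite addrA subrK.
  move=> tri.
  have : lam * enorm (y - x) <= lam * (enorm (y - z) + enorm (z - x)) by rewrite ler_pM2l.
  lra.
set L := p * lam * powR s (p - 1).
have L0 : 0 < L by rewrite mulr_gt0 ?powR_gt0 // mulr_gt0.
have Hlow2 y : g z - L * enorm (y - z) <= g y.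
  have Y := young_tangent p1 (h0 y) (ltW s0).
  rewrite hp -/s (hp z) in Y.
  have E : s * powR s (p - 1) = g z by rewrite mulr_powRB1 ?(ltW s0) // -/s hp.
  have S10 : 0 <= powR s (p - 1) := powR_ge0 _ _.
  have : p * (s - lam * enorm (y - z)) * powR s (p - 1) <= p * h y * powR s (p - 1).
    by apply: ler_wpM2r => //; rewrite ler_pM2l // Hlow.
  have -> : p * (s - lam * enorm (y - z)) * powR s (p - 1) = p * g z - L * enorm (y - z).
    by rewrite -E /L; ring.
  lra.
have CL : C * powR L q = rho * g z.
  rewrite /L powRM ?powR_ge0 //; last by rewrite mulr_ge0 // ltW.
  rewrite -powRrM (_ : (p - 1) * q = p); last by rewrite /q; field; rewrite gt_eqF.
  by rewrite -/s (hp z) /rho mulrA.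
set th := powR ((1 + rho) / (2 * rho)) q^-1.
have rr0 : 0 < (1 + rho) / (2 * rho).
  by apply: divr_gt0; [exact: addr_gt0 ltr01 rho0 | exact: mulr_gt0 _ rho0].
have thq : powR th q = (1 + rho) / (2 * rho).
  by rewrite /th -powRrM mulVf ?gt_eqF // powRr1 // ltW.
have th1 : 1 < th.
  have r1 : 1 < (1 + rho) / (2 * rho).
    have r2 := aux_r2 rho1.
    have r20 : 0 < 2 * rho by rewrite mulr_gt0.
    rewrite ltr_pdivlMr //.
    by move: r2; rewrite -[X in X < _ -> _]mul1r.
  have n1 : (1 : R) \in Num.nneg by rewrite nnegrE ler01.
  have n2 : (1 + rho) / (2 * rho) \in Num.nneg by rewrite nnegrE ltW.
  have qi0 : 0 < q^-1 by rewrite invr_gt0.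
  have := gt0_ltr_powR qi0 n1 n2 r1.
  have -> : powR 1 q^-1 = 1 by rewrite powR1.
  by [].
set L' := L * th.
have LL' : L < L' by rewrite /L' -{1}(mulr1 L) ltr_pM2l.
have L'0 : 0 < L' by apply: lt_trans LL'.
have CL' : C * powR L' q = g z * ((1 + rho) / 2).
  rewrite /L' powRM ?ltW // ?(lt_trans _ th1) // mulrA CL thq.
  by field; rewrite gt_eqF.
set gam := g z - C * powR L' q.
have gam0 : 0 < gam.
  rewrite /gam CL' subr_gt0.
  rewrite -{2}(mulr1 (g z)) ltr_pM2l // ltr_pdivrMr //; exact: aux_r3.
set eta := gam * (L' - L) / (2 * L * L').
have eta0 : 0 < eta.
  have LL0 : 0 < L' - L by rewrite subr_gt0.
  by apply: divr_gt0; apply: mulr_gt0 => //; apply: mulr_gt0.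
pose Psi y := g y + L' * Num.sqrt (enorm (y - z) ^+ 2 + eta ^+ 2).
have Psic : econtinuous Psi := econt_add gc (econt_pen z eta (ltW L'0)).
have Psiz : Psi z = g z + L' * eta.
  by rewrite /Psi subrr enorm0 expr0n add0r sqrtr_sqr ger0_norm // ltW.
have [w Hw] : exists w, forall y, Psi w <= Psi y.
  apply: (@exists_min _ _ Psi z (Psi z / L') Psic) => y hy.
  have : L' * (Psi z / L') <= L' * enorm (y - z) by rewrite ler_pM2l.
  rewrite mulrCA divff ?gt_eqF // mulr1 => hh.
  have h2 : L' * enorm (y - z) <= L' * Num.sqrt (enorm (y - z) ^+ 2 + eta ^+ 2).
    by rewrite ler_pM2l // enorm_le_pen.
  rewrite /Psi; apply: le_trans hh _; apply: le_trans h2 _; exact: ler_wpDl (g0 y) _.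
set r := enorm (w - z).
set A := Num.sqrt (r ^+ 2 + eta ^+ 2).
have rA : r <= A := enorm_le_pen _ _.
have eA : eta <= A.
  rewrite -(ler_pXn2r (_ : (0<2)%N)) ?nnegrE ?sqrtr_ge0 ?(ltW eta0) //.
  by rewrite sqr_sqrtr ?addr_ge0 ?sqr_ge0 // lerDr sqr_ge0.
have A0 : 0 < A := lt_le_trans eta0 eA.
have h2 := Hlow2 w; rewrite -/r in h2.
have Lr : L * r < gam.
  have h1 := Hw z; rewrite Psiz /Psi -/r -/A in h1.
  have h3 : L' * r <= L' * A by rewrite ler_pM2l.
  have h4 : (L' - L) * r <= L' * eta by clear -h1 h2 h3; lra.
  have h5 : (L' - L) * (L * r) <= (L' - L) * (gam / 2).
    have -> : (L' - L) * (gam / 2) = L * (L' * eta).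
      by rewrite /eta; field; rewrite ?gt_eqF ?subr_gt0 //; apply/andP; split; rewrite gt_eqF.
    by rewrite mulrCA ler_pM2l.
  rewrite ler_pM2l ?subr_gt0 // in h5.
  by apply: le_lt_trans h5 _; rewrite ltr_pdivrMr //; clear -gam0; lra.
have gwlow : C * powR L' q < g w.
  by move: Lr h2; rewrite /gam; clear; lra.
set v := (L' / A) *: (z - w).
have nv : enorm v <= L'.
  rewrite /v enormZ enormB -/r ger0_norm; last by apply: divr_ge0; apply: ltW.
  rewrite mulrAC ler_pdivrMr // ler_pM2l //.
have Hv : frechet_subdiff f w v.
  move=> e e0; exists (e * eta / L'); first by apply: divr_gt0 => //; exact: mulr_gt0.
  move=> y /andP[t0 ty].
  have hpen := pen_vec z w y eta0; rewrite -/r -/A in hpen.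
  have hmin := Hw y; rewrite /Psi -/r -/A in hmin.
  move: hpen hmin t0 ty.
  set t := enorm (y - w).
  set B := Num.sqrt (enorm (y - z) ^+ 2 + eta ^+ 2).
  set X := dotv (w - z) (y - w).
  move=> hpen hmin t0 ty.
  have dv : dotv v (y - w) = - (L' / A) * X.
    by rewrite /v dotvZl -[z - w]opprB dotvNl -/X mulrN mulNr.
  have hB : L' * B <= L' * (A + X / A + t ^+ 2 / eta) by rewrite ler_pM2l.
  have E1 : L' * (A + X / A + t ^+ 2 / eta) = L' * A + L' / A * X + L' / eta * t ^+ 2.
    by rewrite !mulrDr !mulrA ![_ * _^-1 * _]mulrAC.
  rewrite E1 in hB.
  have Ef : f y - f w = g y - g w by rewrite /g opprB addrA subrK.
  rewrite ler_pdivlMr // Ef dv.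
  have ht : L' / eta * t ^+ 2 <= e * t.
    rewrite expr2 mulrA ler_pM2r // mulrAC ler_pdivrMr // mulrC.
    by rewrite ltr_pdivlMr // in ty; exact: ltW.
  move: hB hmin ht; clear; lra.
have := HF w v Hv.
have : powR (enorm v) q <= powR L' q.
  by apply: ge0_ler_powR; rewrite ?nnegrE ?enorm_ge0 // ltW.
move=> h6 h7.
have : C * powR (enorm v) q <= C * powR L' q by rewrite ler_pM2l.
move: gwlow h7; clear; lra.
Qed.
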